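(* Let $G$ be a weakly modular graph. Then every BFS order of the vertices of $G$ is a distance-preserving ordering.
   Context: Graphs are simple, undirected, connected, possibly infinite; $d$ is graph distance, $N(x)$ the set of neighbors of $x$. Weakly modular: for every vertex $u$, (TC) for $v,w$ with $1=d(v,w)<d(u,v)=d(u,w)$ there is a common neighbor $x$ of $v,w$ with $d(u,x)=d(u,v)-1$, and (QC) for $v,w,z$ with $d(v,z)=d(w,z)=1$, $2=d(v,w)\le d(u,v)=d(u,w)=d(u,z)-1$ there is a common neighbor $x$ of $v,w$ with $d(u,x)=d(u,v)-1$. A well-order $\preceq$ on $V(G)$ is a BFS order if there is a family $\{A_x: x\in V(G)\}$ of subsets of $V(G)$ such that for every $x$: (S1) $x\in A_x$; (S2) if $x\preceq y$ then $A_x$ is an initial segment of $A_y$; (S3) $A_x=A_{(x)}\cup N(x)$, where $A_{(x)}=\{x\}$ if $x$ is the least element and $A_{(x)}=\bigcup_{y\prec x}A_y$ otherwise. A well-order $\prec$ is distance-preserving if for every vertex $v$ the subgraph of $G$ induced by $\{u: u\preceq v\}$ is an isometric subgraph of $G$. *)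

(* Defs.v *)
Set Implicit Arguments.

Section Graphs.
Variable V : Type.

Inductive walk (adj : V -> V -> Prop) : nat -> V -> V -> Prop :=
| walk0 : forall x, walk adj 0 x x
| walkS : forall n x y z, adj x y -> walk adj n y z -> walk adj (S n) x z.

Definition dist (adj : V -> V -> Prop) (u v : V) (n : nat) : Prop :=
  walk adj n u v /\ forall m, walk adj m u v -> n <= m.

Definition simple_graph (adj : V -> V -> Prop) : Prop :=
  (forall x y, adj x y -> adj y x) /\ (forall x, ~ adj x x).

Definition connected (adj : V -> V -> Prop) : Prop :=
  forall u v, exists n, walk adj n u v.

Definition TC (adj : V -> V -> Prop) (u : V) : Prop :=
  forall v w k, dist adj v w 1 -> 1 < k -> dist adj u v k -> dist adj u w k ->
    exists x, adj v x /\ adj w x /\ dist adj u x (k - 1).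

Definition QC (adj : V -> V -> Prop) (u : V) : Prop :=
  forall v w z k, dist adj v z 1 -> dist adj w z 1 -> dist adj v w 2 -> 2 <= k ->
    dist adj u v k -> dist adj u w k -> dist adj u z (k + 1) ->
    exists x, adj v x /\ adj w x /\ dist adj u x (k - 1).

Definition weakly_modular (adj : V -> V -> Prop) : Prop :=
  forall u, TC adj u /\ QC adj u.

Definition well_order (le : V -> V -> Prop) : Prop :=
  (forall x, le x x) /\
  (forall x y, le x y -> le y x -> x = y) /\
  (forall x y z, le x y -> le y z -> le x z) /\
  (forall x y, le x y \/ le y x) /\
  (forall P : V -> Prop, (exists x, P x) -> exists m, P m /\ forall y, P y -> le m y).

Definition is_least (le : V -> V -> Prop) (x : V) : Prop := forall y, le x y.

Definition initial_segment (le : V -> V -> Prop) (B C : V -> Prop) : Prop :=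
  (forall a, B a -> C a) /\
  (forall a b, B a -> C b -> le b a -> B b).

Definition A_paren (le : V -> V -> Prop) (A : V -> V -> Prop) (x z : V) : Prop :=
  (is_least le x /\ z = x) \/
  (~ is_least le x /\ exists y, le y x /\ y <> x /\ A y z).

Definition BFS_order (adj : V -> V -> Prop) (le : V -> V -> Prop) : Prop :=
  well_order le /\
  exists A : V -> V -> Prop,
    (forall x, A x x) /\
    (forall x y, le x y -> initial_segment le (A x) (A y)) /\
    (forall x z, A x z <-> (A_paren le A x z \/ adj x z)).

Definition induced (adj : V -> V -> Prop) (S : V -> Prop) : V -> V -> Prop :=
  fun a b => S a /\ S b /\ adj a b.

Definition isometric (adj : V -> V -> Prop) (S : V -> Prop) : Prop :=
  forall a b n, S a -> S b -> dist adj a b n -> dist (induced adj S) a b n.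

Definition distance_preserving (adj : V -> V -> Prop) (le : V -> V -> Prop) : Prop :=
  forall v, isometric adj (fun u => le u v).

End Graphs.

(* Main.v *)
Require Import Defs.
From Stdlib Require Import Arith Lia Classical ClassicalEpsilon.

Section Walks.
Variable V : Type.

Lemma walk_snoc (R : V -> V -> Prop) :
  forall n x y z, walk R n x y -> R y z -> walk R (S n) x z.
Proof.
  intros n x y z H. revert z. induction H; intros z0 Hz.
  - apply walkS with z0; [exact Hz | apply walk0].
  - apply walkS with y; [exact H | apply IHwalk; exact Hz].
Qed.

Lemma walk_app (R : V -> V -> Prop) :
  forall n m x y z, walk R n x y -> walk R m y z -> walk R (n + m) x z.
Proof.
  intros n m x y z H. revert m z. induction H; intros m0 z0 H2.
  - simpl. exact H2.
  - simpl. apply walkS with y; [exact H | apply IHwalk; exact H2].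
Qed.

Lemma walk_rev (R : V -> V -> Prop) :
  (forall a b, R a b -> R b a) ->
  forall n x y, walk R n x y -> walk R n y x.
Proof.
  intros Hs n x y H. induction H.
  - apply walk0.
  - apply walk_snoc with y; [exact IHwalk | apply Hs; exact H].
Qed.

Lemma walk_S_inv (R : V -> V -> Prop) :
  forall n x z, walk R (S n) x z -> exists y, R x y /\ walk R n y z.
Proof.
  intros n x z H. inversion H; subst. eexists; split; eassumption.
Qed.

Lemma walk_0_inv (R : V -> V -> Prop) :
  forall x z, walk R 0 x z -> x = z.
Proof. intros x z H. inversion H. reflexivity. Qed.

Lemma walk_mono (R R' : V -> V -> Prop) :
  (forall a b, R a b -> R' a b) ->
  forall n x y, walk R n x y -> walk R' n x y.
Proof.
  intros Hs n x y H. induction H.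
  - apply walk0.
  - apply walkS with y; [apply Hs; exact H | exact IHwalk].
Qed.
End Walks.

Section G.
Variable V : Type.
Variable adj : V -> V -> Prop.
Hypothesis adj_sym : forall x y, adj x y -> adj y x.
Hypothesis adj_irr : forall x, ~ adj x x.
Hypothesis conn : forall u v, exists n, walk adj n u v.

Lemma dist_exists : forall u v, exists n, dist adj u v n.
Proof.
  intros u v. destruct (conn u v) as [n Hn].
  revert Hn. pattern n. apply lt_wf_ind. clear n. intros n IH Hn.
  destruct (classic (exists m, m < n /\ walk adj m u v)) as [[m [Hm1 Hm2]]|Hno].
  - exact (IH m Hm1 Hm2).
  - exists n. split; [exact Hn|]. intros m Hm.
    destruct (le_lt_dec n m) as [Hle|Hlt]; [exact Hle|].
    exfalso. apply Hno. exists m. split; assumption.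
Qed.

Definition d (u v : V) : nat :=
  proj1_sig (constructive_indefinite_description _ (dist_exists u v)).

Lemma d_spec : forall u v, dist adj u v (d u v).
Proof. intros u v. unfold d. destruct (constructive_indefinite_description _ _) as [n Hn]. exact Hn. Qed.

Lemma d_walk : forall u v, walk adj (d u v) u v.
Proof. intros u v. exact (proj1 (d_spec u v)). Qed.

Lemma d_le : forall n u v, walk adj n u v -> d u v <= n.
Proof. intros n u v H. exact (proj2 (d_spec u v) n H). Qed.

Lemma dist_d : forall u v n, dist adj u v n -> n = d u v.
Proof.
  intros u v n [H1 H2]. pose proof (d_spec u v) as [H3 H4].
  apply Nat.le_antisymm; [apply H2; exact H3 | apply H4; exact H1].
Qed.

Lemma d_dist : forall u v n, d u v = n -> dist adj u v n.
Proof. intros u v n <-. apply d_spec. Qed.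

Lemma d_refl : forall u, d u u = 0.
Proof. intros u. pose proof (d_le 0 u u (walk0 adj u)). lia. Qed.

Lemma d_zero : forall u v, d u v = 0 -> u = v.
Proof.
  intros u v H. pose proof (d_walk u v) as W. rewrite H in W.
  apply walk_0_inv in W. exact W.
Qed.

Lemma d_adj : forall u v, adj u v -> d u v = 1.
Proof.
  intros u v H.
  assert (W : walk adj 1 u v) by (apply walkS with v; [exact H | apply walk0]).
  pose proof (d_le 1 u v W).
  destruct (d u v) eqn:E; [|lia].
  apply d_zero in E. subst. exfalso. exact (adj_irr v H).
Qed.

Lemma d_one : forall u v, d u v = 1 -> adj u v.
Proof.
  intros u v H. pose proof (d_walk u v) as W. rewrite H in W.
  apply walk_S_inv in W. destruct W as [y [H1 H2]].
  apply walk_0_inv in H2. subst. exact H1.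
Qed.

Lemma d_sym : forall u v, d u v = d v u.
Proof.
  intros u v. apply Nat.le_antisymm.
  - apply d_le. apply walk_rev; [exact adj_sym | apply d_walk].
  - apply d_le. apply walk_rev; [exact adj_sym | apply d_walk].
Qed.

Lemma d_tri : forall u v w, d u w <= d u v + d v w.
Proof.
  intros u v w. apply d_le. apply walk_app with v; apply d_walk.
Qed.

Lemma d_adj_le : forall u x y, adj x y -> d u y <= S (d u x).
Proof.
  intros u x y H. pose proof (d_tri u x y). rewrite (d_adj x y H) in H0. lia.
Qed.

Lemma d_step : forall u v k, d u v = S k -> exists x, adj u x /\ d x v = k.
Proof.
  intros u v k H. pose proof (d_walk u v) as W. rewrite H in W.
  apply walk_S_inv in W. destruct W as [y [H2 H3]].
  exists y. split; [exact H2|].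
  pose proof (d_le _ _ _ H3) as H0.
  pose proof (d_tri u y v) as H1. rewrite (d_adj u y H2) in H1. lia.
Qed.

Lemma d_ne : forall u v, u <> v -> 1 <= d u v.
Proof. intros u v H. destruct (d u v) eqn:E; [apply d_zero in E; contradiction | lia]. Qed.


Hypothesis wm : weakly_modular adj.

Lemma TCg : forall u v w k, adj v w -> 1 <= k -> d u v = k -> d u w = k ->
  exists x, adj v x /\ adj w x /\ d u x = k - 1.
Proof.
  intros u v w k Hvw Hk Hv Hw.
  destruct (Nat.eq_dec k 1) as [E|E].
  - rewrite E in *. exists u. split; [|split].
    + apply adj_sym. apply d_one. exact Hv.
    + apply adj_sym. apply d_one. exact Hw.
    + apply d_refl.
  - destruct (proj1 (wm u) v w k (d_dist _ _ _ (d_adj _ _ Hvw)) ltac:(lia)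
      (d_dist _ _ _ Hv) (d_dist _ _ _ Hw)) as [x [H1 [H2 H3]]].
    exists x. split; [exact H1|split; [exact H2|]]. symmetry. apply dist_d. exact H3.
Qed.

Lemma QCg : forall u v w z k, adj v z -> adj w z -> d v w = 2 -> 1 <= k ->
  d u v = k -> d u w = k -> d u z = k + 1 ->
  exists x, adj v x /\ adj w x /\ d u x = k - 1.
Proof.
  intros u v w z k Hvz Hwz Hvw Hk Hv Hw Hz.
  destruct (Nat.eq_dec k 1) as [E|E].
  - rewrite E in *. exists u. split; [|split].
    + apply adj_sym. apply d_one. exact Hv.
    + apply adj_sym. apply d_one. exact Hw.
    + apply d_refl.
  - destruct (proj2 (wm u) v w z k (d_dist _ _ _ (d_adj _ _ Hvz))
      (d_dist _ _ _ (d_adj _ _ Hwz)) (d_dist _ _ _ Hvw) ltac:(lia)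
      (d_dist _ _ _ Hv) (d_dist _ _ _ Hw) (d_dist _ _ _ Hz)) as [x [H1 [H2 H3]]].
    exists x. split; [exact H1|split; [exact H2|]]. symmetry. apply dist_d. exact H3.
Qed.

Lemma TQ : forall u y1 y2 c K, adj y1 c -> adj y2 c -> y1 <> y2 -> 1 <= K ->
  d u y1 = K -> d u y2 = K -> d u c = S K ->
  exists x, adj y1 x /\ adj y2 x /\ d u x = K - 1.
Proof.
  intros u y1 y2 c K H1 H2 Hne HK E1 E2 Ec.
  pose proof (d_tri y1 c y2) as T.
  rewrite (d_adj y1 c H1), (d_adj c y2 (adj_sym _ _ H2)) in T.
  pose proof (d_ne y1 y2 Hne) as T2.
  destruct (Nat.eq_dec (d y1 y2) 1) as [E|E].
  - apply TCg; try assumption. apply d_one. exact E.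
  - apply QCg with c; try assumption. lia. lia.
Qed.


Variable le : V -> V -> Prop.
Variable Af : V -> V -> Prop.
Hypothesis wo : well_order le.
Hypothesis S1 : forall x, Af x x.
Hypothesis S2 : forall x y, le x y -> initial_segment le (Af x) (Af y).
Hypothesis S3 : forall x z, Af x z <-> (A_paren le Af x z \/ adj x z).
Variable r : V.
Hypothesis r_least : is_least le r.

Lemma le_refl : forall x, le x x.
Proof. destruct wo as [H _]. exact H. Qed.
Lemma le_antisym : forall x y, le x y -> le y x -> x = y.
Proof. destruct wo as [_ [H _]]. exact H. Qed.
Lemma le_trans : forall x y z, le x y -> le y z -> le x z.
Proof. destruct wo as [_ [_ [H _]]]. exact H. Qed.
Lemma le_total : forall x y, le x y \/ le y x.
Proof. destruct wo as [_ [_ [_ [H _]]]]. exact H. Qed.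
Lemma le_min : forall P : V -> Prop, (exists x, P x) -> exists m, P m /\ forall y, P y -> le m y.
Proof. destruct wo as [_ [_ [_ [_ H]]]]. exact H. Qed.

Lemma nle_lt : forall x y, ~ le y x -> le x y /\ x <> y.
Proof.
  intros x y H. destruct (le_total x y) as [H1|H1]; [|contradiction].
  split; [exact H1|]. intros E. subst. apply H. apply le_refl.
Qed.

Lemma lt_nle : forall x y, le x y -> x <> y -> ~ le y x.
Proof. intros x y H1 H2 H3. apply H2. apply le_antisym; assumption. Qed.

Lemma A_init : forall x a c, Af x a -> le c a -> Af x c.
Proof.
  intros x a c Ha Hca. destruct (le_total x c) as [H|H].
  - destruct (S2 x c H) as [_ Hi]. apply (Hi a c Ha (S1 c) Hca).
  - destruct (S2 c x H) as [Hs _]. apply Hs. apply S1.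
Qed.

Lemma f_ex : forall x, exists m, Af m x /\ forall y, Af y x -> le m y.
Proof. intros x. apply le_min. exists x. apply S1. Qed.

Definition f (x : V) : V := proj1_sig (constructive_indefinite_description _ (f_ex x)).

Lemma f_spec : forall x, Af (f x) x /\ forall y, Af y x -> le (f x) y.
Proof. intros x. unfold f. destruct (constructive_indefinite_description _ _) as [m Hm]. exact Hm. Qed.

Lemma f_A : forall x, Af (f x) x.
Proof. intros x. apply f_spec. Qed.
Lemma f_min : forall x y, Af y x -> le (f x) y.
Proof. intros x y. apply f_spec. Qed.
Lemma f_le : forall x, le (f x) x.
Proof. intros x. apply f_min. apply S1. Qed.
Lemma f_nb : forall x y, adj y x -> le (f x) y.
Proof. intros x y H. apply f_min. apply S3. right. exact H. Qed.

Lemma least_r : forall x, is_least le x -> x = r.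
Proof. intros x H. apply le_antisym; [apply H | apply r_least]. Qed.

Lemma f_adj : forall x, x <> r -> adj (f x) x.
Proof.
  intros x Hx. pose proof (f_A x) as H. apply S3 in H.
  destruct H as [[[Hl E]|[Hnl [y [Hy1 [Hy2 Hy3]]]]]|H]; [| |exact H].
  - exfalso. apply Hx. rewrite E. apply least_r. exact Hl.
  - exfalso. apply Hy2. apply le_antisym; [exact Hy1 | apply f_min; exact Hy3].
Qed.

Lemma f_ne : forall x, x <> r -> f x <> x.
Proof. intros x Hx E. pose proof (f_adj x Hx) as H. rewrite E in H. exact (adj_irr x H). Qed.

Lemma f_mono : forall x y, le x y -> le (f x) (f y).
Proof. intros x y H. apply f_min. apply A_init with y; [apply f_A | exact H]. Qed.

Lemma f_r : f r = r.
Proof. apply le_antisym; [apply f_le | apply r_least]. Qed.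

Definition lev (x : V) : nat := d r x.

Lemma lev_r : lev r = 0.
Proof. apply d_refl. Qed.

Lemma lev_0 : forall x, lev x = 0 -> x = r.
Proof. intros x H. symmetry. apply d_zero. exact H. Qed.

Lemma lev_adj : forall x y, adj x y -> lev y <= S (lev x).
Proof. intros x y H. apply d_adj_le. exact H. Qed.

Lemma lev_down : forall x k, lev x = S k -> exists p, adj x p /\ lev p = k.
Proof.
  intros x k H. unfold lev in H. rewrite d_sym in H.
  destruct (d_step x r k H) as [p [H1 H2]]. exists p. split; [exact H1|].
  unfold lev. rewrite d_sym. exact H2.
Qed.

Lemma lev_lt : forall n x y, lev x <= n -> n < lev y -> ~ le y x.
Proof.
  induction n as [|n IH]; intros x y Hx Hy Hle.
  - assert (E : x = r) by (apply lev_0; lia). subst x.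
    assert (E : y = r) by (apply le_antisym; [exact Hle | apply r_least]).
    subst y. rewrite lev_r in Hy. lia.
  - destruct (Nat.le_gt_cases (lev x) n) as [H1|H1].
    + apply (IH x y H1 ltac:(lia) Hle).
    + assert (Ex : lev x = S n) by lia.
      destruct (lev_down x n Ex) as [p [Hp1 Hp2]].
      assert (Hy0 : y <> r) by (intros E; subst; rewrite lev_r in Hy; lia).
      pose proof (lev_adj _ _ (f_adj y Hy0)) as Hfy.
      assert (Hfp : le (f x) p) by (apply f_nb; apply adj_sym; exact Hp1).
      apply (IH p (f y) ltac:(lia) ltac:(lia)).
      apply le_trans with (f x); [apply f_mono; exact Hle | exact Hfp].
Qed.

Lemma lev_mono : forall x y, le x y -> lev x <= lev y.
Proof.
  intros x y H. destruct (Nat.le_gt_cases (lev x) (lev y)) as [H1|H1]; [exact H1|].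
  exfalso. exact (lev_lt (lev y) y x (le_n _) H1 H).
Qed.

Lemma lev_f : forall x, x <> r -> S (lev (f x)) = lev x.
Proof.
  intros x Hx.
  destruct (lev x) eqn:E. { exfalso. apply Hx. apply lev_0. exact E. }
  destruct (lev_down x n E) as [p [Hp1 Hp2]].
  assert (H1 : le (f x) p) by (apply f_nb; apply adj_sym; exact Hp1).
  pose proof (lev_adj _ _ (f_adj x Hx)) as H2. rewrite E in H2.
  destruct (Nat.le_gt_cases (lev (f x)) n) as [H3|H3]; [lia|].
  exfalso. apply (lev_lt n p (f x) ltac:(lia) H3 H1).
Qed.

Fixpoint fi (q : nat) (x : V) : V :=
  match q with 0 => x | S q' => f (fi q' x) end.

Lemma fi_mono : forall q x y, le x y -> le (fi q x) (fi q y).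
Proof. induction q; intros x y H; simpl; [exact H | apply f_mono; apply IHq; exact H]. Qed.

Lemma fi_S : forall q x, fi (S q) x = fi q (f x).
Proof. induction q; intros x; [reflexivity|]. simpl. f_equal. apply IHq. Qed.

Lemma fi_le_f : forall q x, le (fi (S q) x) (f x).
Proof.
  induction q; intros x; [apply le_refl|].
  apply le_trans with (fi (S q) x); [apply f_le | apply IHq].
Qed.

Lemma fi_lev : forall q x, q <= lev x -> lev (fi q x) + q = lev x.
Proof.
  induction q; intros x H; simpl; [lia|].
  assert (Hr : fi q x <> r).
  { intros E. pose proof (IHq x ltac:(lia)) as H1. rewrite E, lev_r in H1. lia. }
  pose proof (lev_f _ Hr). pose proof (IHq x ltac:(lia)). lia.
Qed.

Lemma fi_ne_r : forall q x, S q <= lev x -> fi q x <> r.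
Proof.
  intros q x H E. pose proof (fi_lev q x ltac:(lia)) as H1. rewrite E, lev_r in H1. lia.
Qed.

Lemma fi_adj : forall q x, S q <= lev x -> adj (fi (S q) x) (fi q x).
Proof. intros q x H. simpl. apply f_adj. apply fi_ne_r. exact H. Qed.


Lemma first_break : forall (P : nat -> Prop) j, P 0 ->
  (forall l, l <= j -> P l) \/ (exists i, i < j /\ (forall l, l <= i -> P l) /\ ~ P (S i)).
Proof.
  intros P j H0. induction j as [|j IH].
  - left. intros l Hl. assert (l = 0) by lia. subst. exact H0.
  - destruct IH as [IH|[i [Hi1 [Hi2 Hi3]]]].
    + destruct (classic (P (S j))) as [HP|HP].
      * left. intros l Hl. destruct (Nat.eq_dec l (S j)) as [E|E]; [subst; exact HP|].
        apply IH. lia.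
      * right. exists j. split; [lia|]. split; [exact IH|exact HP].
    + right. exists i. split; [lia|]. split; assumption.
Qed.

Section Vfix.
Variable v : V.
Hypothesis v_nr : v <> r.

Definition bv : V := f v.
Definition InA (z : V) : Prop := A_paren le Af bv z.

Lemma bv_adj : adj bv v.
Proof. apply f_adj. exact v_nr. Qed.

Lemma bv_lt : le bv v /\ bv <> v.
Proof. split; [apply f_le | apply f_ne; exact v_nr]. Qed.

Lemma lev_v : lev v = S (lev bv).
Proof. symmetry. apply lev_f. exact v_nr. Qed.

Lemma A_lt_v : forall z, InA z -> ~ le v z.
Proof.
  intros z Hz Hvz. unfold InA, A_paren in Hz.
  destruct Hz as [[Hl E]|[Hnl [y [Hy1 [Hy2 Hy3]]]]].
  - subst z. destruct bv_lt as [H1 H2]. apply H2. apply le_antisym; assumption.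
  - apply Hy2. apply le_antisym; [exact Hy1|]. apply f_min. apply A_init with z; assumption.
Qed.

Lemma A_of_lt : forall c z, le c bv -> c <> bv -> (z = c \/ adj c z) -> InA z.
Proof.
  intros c z H1 H2 H3. unfold InA, A_paren. right. split.
  - intros Hl. apply H2. apply le_antisym; [exact H1 | apply Hl].
  - exists c. split; [exact H1|]. split; [exact H2|].
    destruct H3 as [E|H3]; [subst; apply S1 | apply S3; right; exact H3].
Qed.

Lemma A_f_lt : forall z, InA z -> z <> r -> le (f z) bv /\ f z <> bv.
Proof.
  intros z Hz Hr. unfold InA, A_paren in Hz.
  destruct Hz as [[Hl E]|[Hnl [y [Hy1 [Hy2 Hy3]]]]].
  - exfalso. apply Hr. rewrite E. apply least_r. exact Hl.
  - assert (H : le (f z) y) by (apply f_min; exact Hy3).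
    split; [apply le_trans with y; assumption|].
    intros E. rewrite E in H. apply Hy2. apply le_antisym; assumption.
Qed.

Lemma A_low : forall z, lev z < lev v -> InA z.
Proof.
  intros z Hz. rewrite lev_v in Hz.
  destruct (classic (z = r)) as [Ez|Ez].
  - subst z. destruct (classic (bv = r)) as [Eb|Eb].
    + unfold InA, A_paren. left. split; [rewrite Eb; exact r_least | symmetry; exact Eb].
    + apply A_of_lt with r; [apply r_least | intros E; apply Eb; symmetry; exact E | left; reflexivity].
  - pose proof (lev_f z Ez) as H1.
    assert (H2 : ~ le bv (f z)) by (apply (lev_lt (lev (f z))); lia).
    destruct (nle_lt _ _ H2) as [H3 H4].
    apply A_of_lt with (f z); [exact H3 | exact H4 | right; apply f_adj; exact Ez].
Qed.

Lemma h_fib : forall q, d v (fi q bv) <= S q.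
Proof.
  induction q as [|q IH].
  - simpl. rewrite d_sym. rewrite (d_adj _ _ bv_adj). lia.
  - simpl. destruct (classic (fi q bv = r)) as [E|E].
    + rewrite E, f_r. rewrite E in IH. lia.
    + pose proof (d_adj_le v _ _ (adj_sym _ _ (f_adj _ E))). lia.
Qed.

Lemma lift : forall u k i, 2 <= k -> i < lev u ->
  (forall l, l <= i -> d v (fi l u) = k + l) ->
  forall m, m <= i -> forall y, adj y (fi m u) -> S (d v y) = d v (fi m u) ->
  lev y <= lev (fi m u) ->
  exists x, adj x u /\ S (d v x) = k /\ lev x <= lev u /\
    (lev y < lev (fi m u) -> lev x < lev u) /\ (m = 0 -> x = y) /\
    (1 <= m -> ~ InA x -> le (fi (m-1) bv) y).
Proof.
  intros u k i Hk Hi Hh. induction m as [|m IH]; intros Hm y Hy1 Hy2 Hy3.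
  - exists y. simpl in *. pose proof (Hh 0 (le_0_n _)) as H0. simpl in H0.
    split; [exact Hy1|]. split; [lia|]. split; [exact Hy3|]. split; [auto|].
    split; [auto|]. intros H; lia.
  - assert (Hadj : adj (fi (S m) u) (fi m u)) by (apply fi_adj; lia).
    pose proof (fi_lev m u ltac:(lia)) as L1.
    pose proof (fi_lev (S m) u ltac:(lia)) as L2.
    pose proof (Hh m ltac:(lia)) as E1.
    pose proof (Hh (S m) ltac:(lia)) as E2.
    assert (Hyne : y <> fi m u) by (intros E; rewrite E in Hy3; lia).
    destruct (TQ v y (fi m u) (fi (S m) u) (k + m) Hy1 (adj_sym _ _ Hadj) Hyne ltac:(lia)
      ltac:(lia) E1 ltac:(lia)) as [y' [Hy'1 [Hy'2 Hy'3]]].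
    pose proof (lev_adj _ _ Hy'1) as Ly'.
    destruct (IH ltac:(lia) y' (adj_sym _ _ Hy'2) ltac:(lia) ltac:(lia))
      as [x [Hx1 [Hx2 [Hx3 [Hx4 [Hx5 Hx6]]]]]].
    exists x. split; [exact Hx1|]. split; [exact Hx2|]. split; [exact Hx3|].
    split; [intros H; apply Hx4; lia|]. split; [intros H; discriminate|].
    intros _ HnA. destruct m as [|m'].
    + simpl. rewrite (Hx5 eq_refl) in HnA.
      destruct (le_total bv y) as [H|H]; [exact H|].
      destruct (classic (y = bv)) as [E|E]; [rewrite E; apply le_refl|].
      exfalso. apply HnA. apply A_of_lt with y; [exact H | exact E | right; exact Hy'1].
    + pose proof (Hx6 ltac:(lia) HnA) as H. simpl in H |- *.
      replace (m' - 0) with m' in H by lia.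
      apply le_trans with (f y'); [apply f_mono; exact H|].
      apply f_nb. exact Hy'1.
Qed.

Lemma KEYp : forall u k, InA u -> d v u = k -> 2 <= k ->
  exists x, adj u x /\ InA x /\ d v x = k - 1.
Proof.
  intros u k HA Hu Hk.
  pose proof (A_lt_v u HA) as Huv.
  destruct (nle_lt _ _ Huv) as [Huv1 Huv2].
  pose proof (lev_mono _ _ Huv1) as Hlev.
  destruct (first_break (fun l => d v (fi l u) = k + l) (lev u)) as [Hall|[i [Hi1 [Hi2 Hi3]]]].
  - simpl. lia.
  - pose proof (Hall (lev u) (le_n _)) as H1.
    pose proof (fi_lev (lev u) u (le_n _)) as H2.
    assert (Er : fi (lev u) u = r) by (apply lev_0; lia).
    rewrite Er in H1. rewrite d_sym in H1. fold (lev v) in H1.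
    assert (Hs : d u v = S (k - 1)) by (rewrite d_sym; lia).
    destruct (d_step u v (k-1) Hs) as [x [Hx1 Hx2]].
    exists x. split; [exact Hx1|]. split.
    + apply A_low. pose proof (lev_adj _ _ Hx1). lia.
    + rewrite d_sym. exact Hx2.
  - assert (Hur : u <> r) by (intros E; subst; rewrite lev_r in Hi1; lia).
    assert (Hadj : adj (fi (S i) u) (fi i u)) by (apply fi_adj; lia).
    pose proof (fi_lev i u ltac:(lia)) as L1.
    pose proof (fi_lev (S i) u ltac:(lia)) as L2.
    pose proof (Hi2 i (le_n _)) as E1.
    pose proof (d_adj_le v _ _ Hadj) as D1.
    pose proof (d_adj_le v _ _ (adj_sym _ _ Hadj)) as D2.
    destruct (Nat.eq_dec (d v (fi (S i) u)) (k + i)) as [E2|E2].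
    +
      destruct (TCg v (fi i u) (fi (S i) u) (k + i) (adj_sym _ _ Hadj) ltac:(lia) E1 E2)
        as [t [Ht1 [Ht2 Ht3]]].
      pose proof (lev_adj _ _ Ht2) as Lt.
      destruct (lift u k i Hk ltac:(lia) Hi2 i (le_n _) t (adj_sym _ _ Ht1) ltac:(lia) ltac:(lia))
        as [x [Hx1 [Hx2 [Hx3 [Hx4 [Hx5 Hx6]]]]]].
      exists x. split; [apply adj_sym; exact Hx1|]. split; [|lia].
      destruct (classic (InA x)) as [HxA|HxA]; [exact HxA|exfalso].
      destruct i as [|i'].
      * rewrite (Hx5 eq_refl) in HxA. apply HxA.
        destruct (A_f_lt u HA Hur) as [F1 F2].
        apply A_of_lt with (f u); [exact F1 | exact F2 | right; exact Ht2].
      * pose proof (Hx6 ltac:(lia) HxA) as H. simpl in H. replace (i' - 0) with i' in H by lia.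
        destruct (A_f_lt u HA Hur) as [F1 F2].
        assert (G1 : le (fi (S i') u) (fi i' bv)).
        { rewrite fi_S. apply fi_mono. exact F1. }
        assert (G2 : le (fi (S i') u) t) by (apply le_trans with (fi i' bv); assumption).
        assert (G3 : f (fi i' bv) = fi (S (S i')) u).
        { apply le_antisym.
          - apply le_trans with (f t); [apply f_mono; exact H|]. apply f_nb. exact Ht2.
          - simpl. apply f_mono. exact G1. }
        pose proof (h_fib (S i')) as G4. simpl in G4. rewrite G3 in G4. lia.
    +
      assert (E3 : S (d v (fi (S i) u)) = d v (fi i u)).
      { assert (d v (fi (S i) u) <> k + S i) by (intros E; apply Hi3; exact E). lia. }
      destruct (lift u k i Hk ltac:(lia) Hi2 i (le_n _) (fi (S i) u) Hadj E3 ltac:(lia))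
        as [x [Hx1 [Hx2 [Hx3 [Hx4 [Hx5 Hx6]]]]]].
      exists x. split; [apply adj_sym; exact Hx1|]. split; [|lia].
      apply A_low. pose proof (Hx4 ltac:(lia)). lia.
Qed.

Lemma KEYit : forall k, 1 <= k -> forall u, InA u -> d v u = k ->
  exists x, InA x /\ adj x v /\ d u x = k - 1.
Proof.
  induction k as [|k IH]; intros Hk u HA Hu; [lia|].
  destruct (Nat.eq_dec k 0) as [E|E].
  - subst k. exists u. split; [exact HA|]. split.
    + apply adj_sym. apply d_one. exact Hu.
    + rewrite d_refl. reflexivity.
  - destruct (KEYp u (S k) HA Hu ltac:(lia)) as [y [Hy1 [Hy2 Hy3]]].
    replace (S k - 1) with k in Hy3 by lia.
    destruct (IH ltac:(lia) y Hy2 Hy3) as [x [Hx1 [Hx2 Hx3]]].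
    exists x. split; [exact Hx1|]. split; [exact Hx2|].
    pose proof (d_tri u y x) as T1. rewrite (d_adj _ _ Hy1) in T1.
    pose proof (d_tri u x v) as T2. rewrite (d_adj _ _ Hx2) in T2.
    rewrite (d_sym u v) in T2. lia.
Qed.

Lemma Claim : forall u, ~ le v u -> forall k, d u v = k -> 1 <= k ->
  exists x, adj x v /\ ~ le v x /\ d u x = k - 1.
Proof.
  intros u Hu k Hk Hk1.
  destruct (classic (InA u)) as [HA|HA].
  - rewrite d_sym in Hk. destruct (KEYit k Hk1 u HA Hk) as [x [Hx1 [Hx2 Hx3]]].
    exists x. split; [exact Hx2|]. split; [apply A_lt_v; exact Hx1 | exact Hx3].
  - destruct (nle_lt _ _ Hu) as [Hu1 Hu2].
    assert (Hb : Af bv u) by (apply A_init with v; [apply f_A | exact Hu1]).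
    apply S3 in Hb. destruct Hb as [Hb|Hb]; [contradiction|].
    pose proof (d_tri u bv v) as T. rewrite (d_adj _ _ (adj_sym _ _ Hb)), (d_adj _ _ bv_adj) in T.
    destruct (Nat.eq_dec k 1) as [E|E].
    + exists u. rewrite E in Hk. split; [apply d_one; exact Hk|]. split; [exact Hu|].
      rewrite d_refl. lia.
    + exists bv. split; [exact bv_adj|]. split.
      * destruct bv_lt as [B1 B2]. apply lt_nle; assumption.
      * rewrite (d_adj _ _ (adj_sym _ _ Hb)). lia.
Qed.

End Vfix.

Lemma iso : forall v0 n a c, le a v0 -> le c v0 -> d a c = n ->
  walk (induced adj (fun w => le w v0)) n a c.
Proof.
  intros v0 n. induction n as [|n IH]; intros a c Ha Hc Hd.
  - apply d_zero in Hd. subst. apply walk0.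
  - assert (Hne : a <> c) by (intros E; subst; rewrite d_refl in Hd; discriminate).
    destruct (le_total a c) as [H|H].
    + assert (Hcr : c <> r).
      { intros E. subst. apply Hne. apply le_antisym; [exact H | apply r_least]. }
      destruct (Claim c Hcr a (lt_nle _ _ H Hne) (S n) Hd ltac:(lia)) as [x [Hx1 [Hx2 Hx3]]].
      destruct (nle_lt _ _ Hx2) as [Hx4 _].
      apply walk_snoc with x.
      * apply IH; [exact Ha | apply le_trans with c; assumption | lia].
      * split; [apply le_trans with c; assumption|]. split; assumption.
    + assert (Har : a <> r).
      { intros E. subst. apply Hne. apply le_antisym; [apply r_least | exact H]. }
      assert (Hne' : c <> a) by (intros E; apply Hne; symmetry; exact E).
      rewrite d_sym in Hd.
      destruct (Claim a Har c (lt_nle _ _ H Hne') (S n) Hd ltac:(lia)) as [x [Hx1 [Hx2 Hx3]]].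
      destruct (nle_lt _ _ Hx2) as [Hx4 _].
      apply walkS with x.
      * split; [exact Ha|]. split; [apply le_trans with a; assumption | apply adj_sym; exact Hx1].
      * apply IH; [apply le_trans with a; assumption | exact Hc | rewrite d_sym; lia].
Qed.

End G.

Theorem theorem9p11 (V : Type) (adj : V -> V -> Prop) :
  simple_graph adj -> connected adj -> weakly_modular adj ->
  forall le : V -> V -> Prop, BFS_order adj le -> distance_preserving adj le.
Proof.
  intros [Hsym Hirr] Hconn Hwm le [Hwo [Af [HS1 [HS2 HS3]]]] v0 a c n Ha Hc Hdist.
  destruct Hwo as [W1 [W2 [W3 [W4 W5]]]].
  destruct (W5 (fun _ => True) (ex_intro _ v0 I)) as [r [_ Hr]].
  assert (Hwo : well_order le) by (repeat split; assumption).
  pose proof (dist_d V adj Hconn a c n Hdist) as En.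
  split.
  - rewrite En. eapply iso with (r := r); eauto. intros y. apply Hr. exact I.
  - intros m Hm. rewrite En. apply (d_le V adj Hconn).
    apply walk_mono with (induced adj (fun w => le w v0)); [|exact Hm].
    intros x y [_ [_ H]]. exact H.
Qed.
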